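(* Let $\pi$ be a rigid $321$-avoiding permutation and $\tau$ a $321$-avoiding permutation. A rigid mapping $f:\pi\to\tau$ is an embedding of $\pi$ into $\tau$ if and only if the problem set $P(f)$ is empty.
   Context: Permutations are identified with their sets of points $(i,\sigma(i))$ with the usual left/right/above/below relations; an embedding is an injective map between point sets preserving the relative horizontal and vertical order of every pair. $x^{\leftarrow}$, $x^{\downarrow}$ denote the points immediately left of / below $x$; $\bot$ means undefined and operators applied to $\bot$ give $\bot$. In a $321$-avoiding permutation $\sigma$, $x$ is upper if some point lies right of and below it, lower if some point lies left of and above it; $U_\sigma,L_\sigma$ are these (disjoint) sets, and $\sigma$ is rigid if $\sigma=U_\sigma\cup L_\sigma$. $T(x)\in\{U,L\}$ is the type of a rigid $x$. For $b\in\{U,L\}$, $y^{\rightarrow}_b$ is the leftmost element of $b_\sigma$ strictly right of $y$ and $y^{\uparrow}_b$ the lowest element of $b_\sigma$ strictly above $y$ ($\bot$ if none). On $U_\sigma$ and on $L_\sigma$, $x\le y$ iff $x=y$ or $y$ is above and right of $x$. A rigid mapping $f:\pi\to\tau$ maps $U_\pi$ into $U_\tau$ and $L_\pi$ into $L_\tau$. A point $x$ of $\pi$ is a problem for $f$ if either $x^{\leftarrow}\neq\bot$ and ($f(x^{\leftarrow})^{\rightarrow}_{T(x)}=\bot$ or $f(x)<f(x^{\leftarrow})^{\rightarrow}_{T(x)}$), or $x^{\downarrow}\neq\bot$ and ($f(x^{\downarrow})^{\uparrow}_{T(x)}=\bot$ or $f(x)<f(x^{\downarrow})^{\uparrow}_{T(x)}$);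 i.e. $f(x)<\max\{f(x^{\leftarrow})^{\rightarrow}_{T(x)},f(x^{\downarrow})^{\uparrow}_{T(x)}\}$, where an undefined bound arising from a defined neighbour counts as exceeding every element. $P(f)$ is the set of problems for $f$. *)

(* Defs.v *)
(* A permutation of length n is sigma : {perm 'I_n};
   its points are identified with their abscissae i : 'I_n,
   point i = (i, sigma i). *)
From mathcomp Require Import all_boot all_fingroup.
Set Implicit Arguments. Unset Strict Implicit. Unset Printing Implicit Defensive.

Section Defs.
Variable n : nat.
Implicit Types (s : {perm 'I_n}) (x y z : 'I_n).

Definition avoids321 s : Prop :=
  forall i j k : 'I_n, i < j -> j < k -> ~ (s k < s j /\ s j < s i).

Definition upper s x : bool := [exists y : 'I_n, (x < y) && (s y < s x)].
Definition lower s x : bool := [exists y : 'I_n, (y < x) && (s x < s y)].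

Definition rigid s : Prop := forall x, upper s x || lower s x.

(* types: b = true stands for U, b = false for L *)
Definition inType s (b : bool) x : bool := if b then upper s x else lower s x.
Definition typ s x : bool := upper s x.

Definition left_nb x : option 'I_n := [pick y : 'I_n | y.+1 == x].
Definition down_nb s x : option 'I_n := [pick y : 'I_n | (s y).+1 == s x].

Definition right_b s (b : bool) y : option 'I_n :=
  [pick z : 'I_n | [&& inType s b z, y < z &
     [forall w : 'I_n, (inType s b w && (y < w)) ==> (z <= w)]]].
Definition up_b s (b : bool) y : option 'I_n :=
  [pick z : 'I_n | [&& inType s b z, s y < s z &
     [forall w : 'I_n, (inType s b w && (s y < s w)) ==> (s z <= s w)]]].

Definition ltpt s x y : bool := (x < y) && (s x < s y).
End Defs.

Section Maps.
Variables m n : nat.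
Implicit Types (p : {perm 'I_m}) (t : {perm 'I_n}).

Definition embedding p t (f : 'I_m -> 'I_n) : Prop :=
  injective f /\
  forall x y : 'I_m, (x < y) = (f x < f y) /\ (p x < p y) = (t (f x) < t (f y)).

Definition rigid_mapping p t (f : 'I_m -> 'I_n) : Prop :=
  forall x : 'I_m, (upper p x -> upper t (f x)) /\ (lower p x -> lower t (f x)).

Definition problem p t (f : 'I_m -> 'I_n) (x : 'I_m) : bool :=
  (if left_nb x is Some l then
     (if right_b t (typ p x) (f l) is Some r then ltpt t (f x) r else true)
   else false)
  ||
  (if down_nb p x is Some d then
     (if up_b t (typ p x) (f d) is Some u then ltpt t (f x) u else true)
   else false).

Definition problems p t (f : 'I_m -> 'I_n) : pred 'I_m := fun x => problem p t f x.
End Maps.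

(* Main.v *)
Require Import Defs.
From mathcomp Require Import all_boot all_fingroup.
Set Implicit Arguments. Unset Strict Implicit. Unset Printing Implicit Defensive.

Section Aux.
Variable n : nat.
Variable t : {perm 'I_n}.

Lemma same_type b (a c : 'I_n) : avoids321 t -> inType t b a -> inType t b c ->
  a < c -> t a < t c.
Proof.
move=> Hav Ha Hc ac.
case: (ltngtP (t a) (t c)) => // H.
- case: b Ha Hc => /= Ha Hc.
  + case/existsP: Hc => z /andP[cz tz].
    by case: (Hav a c z ac cz).
  + case/existsP: Ha => z /andP[za tz].
    by case: (Hav z a c za ac).
- move/val_inj/perm_inj: H => H; by rewrite H ltnn in ac.
Qed.

Lemma same_type_rev b (a c : 'I_n) : avoids321 t -> inType t b a -> inType t b c ->
  t a < t c -> a < c.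
Proof.
move=> Hav Ha Hc tac.
case: (ltngtP a c) => // H.
- have := same_type Hav Hc Ha H. by rewrite ltnNge (ltnW tac).
- move/val_inj: H => H; by rewrite H ltnn in tac.
Qed.

Lemma right_bP b (y r : 'I_n) : right_b t b y = Some r ->
  [/\ inType t b r, y < r & forall w, inType t b w -> y < w -> r <= w].
Proof.
rewrite /right_b; case: pickP => // z /and3P[H1 H2 /forallP H3] [<-].
split=> // w Hw yw; have := H3 w; by rewrite Hw yw.
Qed.

Lemma up_bP b (y r : 'I_n) : up_b t b y = Some r ->
  [/\ inType t b r, t y < t r & forall w, inType t b w -> t y < t w -> t r <= t w].
Proof.
rewrite /up_b; case: pickP => // z /and3P[H1 H2 /forallP H3] [<-].
split=> // w Hw yw; have := H3 w; by rewrite Hw yw.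
Qed.

Lemma right_b_some b (y w : 'I_n) : inType t b w -> y < w -> right_b t b y <> None.
Proof.
move=> Hw yw; rewrite /right_b; case: pickP => // Hn _.
have Pw : (fun z : 'I_n => inType t b z && (y < z)) w by rewrite /= Hw yw.
case: (@arg_minnP _ w (fun z : 'I_n => inType t b z && (y < z)) (fun z : 'I_n => val z) Pw) => z /andP[Hz1 Hz2] Hmin.
have := Hn z; rewrite Hz1 Hz2 /=.
suff -> : [forall w0, inType t b w0 && (y < w0) ==> (z <= w0)] by [].
apply/forallP => w'; apply/implyP => H; exact: Hmin.
Qed.

Lemma up_b_some b (y w : 'I_n) : inType t b w -> t y < t w -> up_b t b y <> None.
Proof.
move=> Hw yw; rewrite /up_b; case: pickP => // Hn _.
have Pw : (fun z : 'I_n => inType t b z && (t y < t z)) w by rewrite /= Hw yw.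
case: (@arg_minnP _ w (fun z : 'I_n => inType t b z && (t y < t z)) (fun z : 'I_n => val (t z)) Pw) => z /andP[Hz1 Hz2] Hmin.
have := Hn z; rewrite Hz1 Hz2 /=.
suff -> : [forall w0, inType t b w0 && (t y < t w0) ==> (t z <= t w0)] by [].
apply/forallP => w'; apply/implyP => H; exact: Hmin.
Qed.
End Aux.

Lemma left_nbP m (x l : 'I_m) : left_nb x = Some l -> l.+1 = x.
Proof. rewrite /left_nb; case: pickP => // z /eqP H [<-] //. Qed.

Lemma down_nbP m (p : {perm 'I_m}) (x l : 'I_m) : down_nb p x = Some l -> (p l).+1 = p x.
Proof. rewrite /down_nb; case: pickP => // z /eqP H [<-] //. Qed.

Lemma left_nb_ex m (x : 'I_m) : 0 < x -> exists l, left_nb x = Some l.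
Proof.
move=> Hx; rewrite /left_nb; case: pickP => [z _|Hn]; first by exists z.
have lt : x.-1 < m by apply: leq_ltn_trans (leq_pred _) (ltn_ord x).
have := Hn (Ordinal lt); by rewrite /= prednK // eqxx.
Qed.

Lemma down_nb_ex m (p : {perm 'I_m}) (x : 'I_m) : 0 < p x -> exists l, down_nb p x = Some l.
Proof.
move=> Hx; rewrite /down_nb; case: pickP => [z _|Hn]; first by exists z.
have lt : (p x).-1 < m by apply: leq_ltn_trans (leq_pred _) (ltn_ord (p x)).
have := Hn ((p^-1)%g (Ordinal lt)); by rewrite permKV /= prednK // eqxx.
Qed.

Theorem corollary1 (m n : nat) (p : {perm 'I_m}) (t : {perm 'I_n})
  (f : 'I_m -> 'I_n) :
  avoids321 p -> rigid p -> avoids321 t -> rigid_mapping p t f ->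
  (embedding p t f <-> (forall x : 'I_m, ~~ problems p t f x)).
Proof.
move=> Hp Hrp Ht Hrm.
have Hty : forall x, inType t (typ p x) (f x).
  move=> x; rewrite /inType /typ; case Hu: (upper p x).
    exact: (Hrm x).1.
  have := Hrp x; rewrite Hu /= => Hl; exact: (Hrm x).2.
split.
- move=> [Hinj Hemb] x; rewrite /problems /problem negb_or; apply/andP; split.
  + case Hl: (left_nb x) => [l|] //.
    have fl : f l < f x by rewrite -(Hemb l x).1 -(left_nbP Hl).
    case Hr: (right_b t (typ p x) (f l)) => [r|].
    * case: (right_bP Hr) => _ _ Hmin.
      by rewrite /ltpt ltnNge (Hmin _ (Hty x) fl).
    * by case: (right_b_some (Hty x) fl).
  + case Hl: (down_nb p x) => [l|] //.
    have fl : t (f l) < t (f x) by rewrite -(Hemb l x).2 -(down_nbP Hl).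
    case Hr: (up_b t (typ p x) (f l)) => [r|].
    * case: (up_bP Hr) => _ _ Hmin.
      by rewrite /ltpt (ltnNge (t (f x))) (Hmin _ (Hty x) fl) andbF.
    * by case: (up_b_some (Hty x) fl).
- move=> H.
  have step1 : forall x : 'I_m, 0 < x -> exists l : 'I_m, l.+1 = x /\ f l < f x.
    move=> x x0; case: (left_nb_ex x0) => l Hl; exists l; split; first exact: left_nbP.
    move: (H x); rewrite /problems /problem Hl negb_or => /andP[Ha _].
    case Hr: (right_b t (typ p x) (f l)) Ha => [r|] //= Hn.
    case: (right_bP Hr) => Hr1 Hr2 _.
    case: (leqP r (f x)) => Hrx; first exact: leq_trans Hr2 Hrx.
    by rewrite /ltpt Hrx (same_type Ht (Hty x) Hr1 Hrx) in Hn.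
  have step2 : forall x : 'I_m, 0 < p x -> exists l : 'I_m, (p l).+1 = p x /\ t (f l) < t (f x).
    move=> x x0; case: (down_nb_ex x0) => l Hl; exists l; split; first exact: down_nbP.
    move: (H x); rewrite /problems /problem Hl negb_or => /andP[_ Ha].
    case Hr: (up_b t (typ p x) (f l)) Ha => [r|] //= Hn.
    case: (up_bP Hr) => Hr1 Hr2 _.
    case: (leqP (t r) (t (f x))) => Hrx; first exact: leq_trans Hr2 Hrx.
    by rewrite /ltpt Hrx (same_type_rev Ht (Hty x) Hr1 Hrx) in Hn.
  have mono1 : forall a b : 'I_m, a < b -> f a < f b.
    move=> a b; move Hk: (nat_of_ord b) => k; elim: k b Hk a => [|k IH] b Hk a ab.
      by [].
    have b0 : 0 < b by rewrite Hk.
    case: (step1 b b0) => l [lb flb].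
    have lk : nat_of_ord l = k by apply: succn_inj; rewrite lb Hk.
    move: ab; rewrite ltnS leq_eqVlt => /orP[/eqP ak|ak].
      by have -> : a = l by apply: val_inj; rewrite /= ak -lk.

    exact: ltn_trans (IH l lk a ak) flb.
  have mono2 : forall a b : 'I_m, p a < p b -> t (f a) < t (f b).
    move=> a b; move Hk: (nat_of_ord (p b)) => k; elim: k b Hk a => [|k IH] b Hk a ab.
      by [].
    have b0 : 0 < p b by rewrite Hk.
    case: (step2 b b0) => l [lb flb].
    have lk : nat_of_ord (p l) = k by apply: succn_inj; rewrite lb Hk.
    move: ab; rewrite ltnS leq_eqVlt => /orP[/eqP ak|ak].
      by have -> : a = l by apply: (perm_inj (s:=p)); apply: val_inj; rewrite /= ak lk.

    exact: ltn_trans (IH l lk a ak) flb.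
  split.
  + move=> a b fab; case: (ltngtP a b) => H1.
    * by have := mono1 _ _ H1; rewrite fab ltnn.
    * by have := mono1 _ _ H1; rewrite fab ltnn.
    * exact: val_inj.
  + move=> x y; split.
    * apply/idP/idP; first exact: mono1.
      move=> Hf; rewrite ltnNge; apply/negP; rewrite leq_eqVlt => /orP[/eqP E|E].
        by move/val_inj: E => E; rewrite E ltnn in Hf.
      by have := mono1 _ _ E; rewrite ltnNge (ltnW Hf).
    * apply/idP/idP; first exact: mono2.
      move=> Hf; rewrite ltnNge; apply/negP; rewrite leq_eqVlt => /orP[/eqP E|E].
        by move/val_inj/perm_inj: E => E; rewrite E ltnn in Hf.
      by have := mono2 _ _ E; rewrite ltnNge (ltnW Hf).
Qed.
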